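(* Let $N,M$ be integers with $0<M<N/2$. The maximal elements of the poset $\mathbf{Str}(N,M)$ are exactly the strings of dimension $N-2M$.
   Context: A circular symbol string of length $N$ is $s=s_1\cdots s_N$ with each $s_i\in\{0,1,X\}$, indices read cyclically modulo $N$; $0,1$ are called bits. A block of $s$ is a maximal cyclic run of consecutive equal symbols. $s$ is a circular cellular string of rank $M$ if it has exactly $M$ blocks of symbol $0$, exactly $M$ blocks of symbol $1$, and every block of symbol $X$ is cyclically preceded and followed by blocks of different bits (one of symbol $0$ and one of symbol $1$). Its dimension is its number of symbols $X$. $\mathbf{Str}(N,M)$ is the set of such strings, partially ordered by $s'<s$ iff $s$ is obtained from $s'$ by replacing some (at least one) of the bits of $s'$ by $X$. *)

(* Defs.v *)
From HB Require Import structures.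
From mathcomp Require Import all_boot.
Set Implicit Arguments. Unset Strict Implicit. Unset Printing Implicit Defensive.

Inductive sym := Z0 | Z1 | SX.

Definition sym_eqb (a b : sym) : bool :=
  match a, b with
  | Z0, Z0 | Z1, Z1 | SX, SX => true
  | _, _ => false
  end.

Lemma sym_eqP : Equality.axiom sym_eqb.
Proof. by case; case; constructor. Qed.

HB.instance Definition _ := hasDecEq.Build sym sym_eqP.

Definition is_bit (c : sym) : bool := c != SX.

(* Circular strings are sequences; position n is read modulo the length. *)
Definition sat (s : seq sym) (n : nat) : sym := nth SX s (n %% size s).

(* The cyclic interval of positions {i, i+1, ..., i+k-1} (mod N). *)
Definition cint (N : nat) (i : 'I_N) (k : nat) : {set 'I_N} :=
  [set j : 'I_N | (j + N - i) %% N < k].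

Definition is_cint (N : nat) (S : {set 'I_N}) : bool :=
  [exists i : 'I_N, exists k : 'I_N.+1, (0 < k) && (S == cint i k)].

Definition mono (N : nat) (s : seq sym) (c : sym) (S : {set 'I_N}) : bool :=
  [forall j in S, sat s j == c].

Definition is_block (N : nat) (s : seq sym) (c : sym) (S : {set 'I_N}) : bool :=
  [&& is_cint S, mono s c S &
      [forall S' : {set 'I_N},
         [&& is_cint S', mono s c S' & S \subset S'] ==> (S' == S)]].

Definition nblocks (N : nat) (s : seq sym) (c : sym) : nat :=
  #|[set S : {set 'I_N} | is_block s c S]|.

Definition X_cond (N : nat) (s : seq sym) : bool :=
  [forall i : 'I_N, forall k : 'I_N.+1,
     ((0 < k) && is_block s SX (cint i k)) ==>
     [&& is_bit (sat s (i + N - 1)), is_bit (sat s (i + k)) &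
         sat s (i + N - 1) != sat s (i + k)]].

Definition cellular (N M : nat) (s : seq sym) : Prop :=
  [/\ size s = N, nblocks N s Z0 = M, nblocks N s Z1 = M & X_cond N s].

Definition dimension (s : seq sym) : nat := count (pred1 SX) s.

Definition str_lt (s' s : seq sym) : Prop :=
  [/\ size s' = size s,
      all2 (fun a b => (a == b) || (is_bit a && (b == SX))) s' s & s' != s].

Definition maximal_in_Str (N M : nat) (s : seq sym) : Prop :=
  cellular N M s /\ forall t, cellular N M t -> ~ str_lt s t.

(* Main.v *)
Require Import Defs.
From mathcomp Require Import all_boot zify.
Set Implicit Arguments. Unset Strict Implicit.

Definition dd (N i j : nat) := (j + N - i) %% N.

Lemma L1 N i j : i < N -> j < N -> (i + dd N i j) %% N = j.
Proof.
move=> hi hj; rewrite /dd modnDmr subnKC; last lia.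
by rewrite modnDr modn_small.
Qed.

Lemma L2 N i m : i < N -> m < N -> dd N i ((i+m) %% N) = m.
Proof.
move=> hi hm; rewrite /dd.
have h0 : 0 < N by lia.
have: (i + ((i + m) %% N + N - i)) = (i+m) %% N + N.
  have := ltn_pmod (i+m) h0; lia.
move=> e; apply/eqP; rewrite -(modn_small hm) -(eqn_modDl i) modnDmr e modnDr modn_mod.
done.
Qed.

Lemma ddlt N i j : 0 < N -> dd N i j < N.
Proof. by move=> h; rewrite /dd ltn_pmod. Qed.

Lemma satE s a b : a %% size s = b %% size s -> sat s a = sat s b.
Proof. by rewrite /sat => ->. Qed.

Lemma satM s a : sat s (a %% size s) = sat s a.
Proof. by apply: satE; rewrite modn_mod. Qed.

Lemma satMN s N a : size s = N -> sat s (a %% N) = sat s a.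
Proof. by move=> <-; apply: satM. Qed.

Lemma cnt (T:Type) (a : pred T) (x0:T) (s : seq T) : count a s = #|[pred j : 'I_(size s) | a (nth x0 s j)]|.
Proof.
rewrite cardE /enum_mem size_filter /= -enumT /=.
rewrite -(count_map val (fun j => a (nth x0 s j))).
rewrite val_enum_ord.
by rewrite -{1}(mkseq_nth x0 s) /mkseq count_map.
Qed.

Lemma in_cint N (i j : 'I_N) k : (j \in cint i k) = (dd N i j < k).
Proof. by rewrite inE. Qed.

Lemma mono_cint N s c (i : 'I_N) k : size s = N -> k <= N ->
  mono s c (cint i k) <-> (forall m, m < k -> sat s (i + m) = c).
Proof.
move=> hs hk; have h0 : 0 < N by case: i => /= ??; lia.
split.
- move=> /forall_inP H m hm.
  have hlt : (i + m) %% N < N by rewrite ltn_pmod.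
  have := H (Ordinal hlt); rewrite in_cint /= L2 //; last lia.
  by move=> /(_ hm) /eqP; rewrite satMN.
- move=> H; apply/forall_inP => j; rewrite in_cint => hj.
  by rewrite -(L1 (ltn_ord i) (ltn_ord j)) satMN // H.
Qed.

Lemma ddE N i j e : i < N -> j < N -> e < N -> (i + e) %% N = j -> dd N i j = e.
Proof. by move=> hi hj he <-; rewrite L2. Qed.

Lemma modS N x y : (x + 1) %% N = (y + 1) %% N -> x %% N = y %% N.
Proof. by move=> /eqP; rewrite eqn_modDr => /eqP. Qed.

Lemma allc N s c (i : nat) : 0 < N -> size s = N ->
  (forall m, m < N -> sat s (i + m) = c) -> forall j, sat s j = c.
Proof.
move=> h0 hs H j.
have hi : i %% N < N by rewrite ltn_pmod.
have hj : j %% N < N by rewrite ltn_pmod.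
rewrite -(satMN _ hs) -(L1 hi hj) modnDml satMN //.
by apply: H; rewrite ddlt.
Qed.

Definition run N s c (i k : nat) : Prop :=
  [/\ sat s (i + N - 1) != c, forall m, m < k -> sat s (i + m) = c & sat s (i + k) != c].

Lemma cint_mono N (i : 'I_N) k k' : k <= k' -> cint i k \subset cint i k'.
Proof. move=> h; apply/subsetP => j; rewrite !in_cint => h'; lia. Qed.

Lemma ord_pos N (i : 'I_N) : 0 < N.
Proof. by case: i => /= ??; lia. Qed.

Lemma KL1 N s c (i : 'I_N) k : size s = N -> (exists j, sat s j != c) ->
  0 < k -> k <= N -> is_block s c (cint i k) -> run N s c i k.
Proof.
move=> hs [j0 hj0] hk0 hkN /and3P [_ hmo /forallP hmax].
have h0 := ord_pos i.
have hm := (mono_cint c i hs hkN).1 hmo.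
have hkN' : k < N.
  rewrite ltn_neqAle hkN andbT; apply/negP => /eqP E; subst k.
  by move: hj0; rewrite (allc h0 hs hm) eqxx.
split => //.
- apply/negP => /eqP E.
  have hi' : (i + N - 1) %% N < N by rewrite ltn_pmod.
  set i' := Ordinal hi'.
  have hk1 : k.+1 < N.+1 by lia.
  have := hmax (cint i' k.+1).
  have hmo' : mono s c (cint i' k.+1).
    apply/(mono_cint c i' hs hkN') => -[|m] hm1 /=.
      by rewrite addn0 satMN.
    rewrite -(hm m); last lia.
    apply: satE; rewrite hs modnDml /=; have -> : i + N - 1 + m.+1 = i + m + N by lia.
    by rewrite modnDr.
  have hic : is_cint (cint i' k.+1).
    apply/existsP; exists i'; apply/existsP; exists (Ordinal hk1) => /=.
    by rewrite eqxx.
  have hsub : cint i k \subset cint i' k.+1.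
    apply/subsetP => j; rewrite !in_cint => hj.
    rewrite (@ddE _ _ _ (dd N i j).+1) //; first lia.
    rewrite -[in RHS](L1 (ltn_ord i) (ltn_ord j)) /= modnDml.
    have -> : i + N - 1 + (dd N i j).+1 = i + dd N i j + N by lia.
    by rewrite modnDr.
  rewrite hic hmo' hsub /= => /eqP E'.
  have : (i' : 'I_N) \in cint i k.
    by rewrite -E' in_cint (@ddE _ _ _ 0) // addn0 modn_small.
  rewrite in_cint (@ddE _ _ _ N.-1) //=; try lia.
  congr (_ %% _); lia.
- apply/negP => /eqP E.
  have hk1 : k.+1 < N.+1 by lia.
  have := hmax (cint i k.+1).
  have hmo' : mono s c (cint i k.+1).
    apply/(mono_cint c i hs hkN') => m hm1.
    case: (ltngtP m k) => hmk; [by apply: hm | lia | by subst m].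
  have hic : is_cint (cint i k.+1).
    apply/existsP; exists i; apply/existsP; exists (Ordinal hk1) => /=.
    by rewrite eqxx.
  rewrite hic hmo' cint_mono //= => /eqP E'.
  have hl : (i + k) %% N < N by rewrite ltn_pmod.
  have : (Ordinal hl : 'I_N) \in cint i k.
    by rewrite -E' in_cint (@ddE _ _ _ k) //.
  by rewrite in_cint (@ddE _ _ _ k) // ltnn.
Qed.

Lemma L_start N s c (i i' : 'I_N) k' : size s = N -> sat s (i + N - 1) != c ->
  k' <= N -> (forall m, m < k' -> sat s (i' + m) = c) -> i \in cint i' k' -> i = i'.
Proof.
move=> hs hc hk H; rewrite in_cint.
have e := L1 (ltn_ord i') (ltn_ord i).
case ha: (dd N i' i) e => [|a] e hlt.
  by apply: val_inj; rewrite /= -e addn0 modn_small.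
have := H a; rewrite ltnW // => /(_ isT) E.
move: hc; rewrite -E; have -> : sat s (i + N - 1) = sat s (i' + a); last by rewrite eqxx.
apply: satE; rewrite hs; apply: modS.
have h0 := ord_pos i.
have -> : i + N - 1 + 1 = i + N by lia.
by rewrite modnDr addn1 -addnS e modn_small.
Qed.

Lemma in_cint0 N (i : 'I_N) k : 0 < k -> i \in cint i k.
Proof. by move=> hk; rewrite in_cint (@ddE _ _ _ 0) // ?addn0 ?modn_small // (ord_pos i). Qed.

Lemma KL2 N s c (i : 'I_N) k : size s = N ->
  0 < k -> k <= N -> run N s c i k -> is_block s c (cint i k).
Proof.
move=> hs hk0 hkN [hl hm hr].
have hk1 : k < N.+1 by lia.
apply/and3P; split.
- apply/existsP; exists i; apply/existsP; exists (Ordinal hk1) => /=.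
  by rewrite hk0 eqxx.
- exact/(mono_cint c i hs hkN).
apply/forallP => S'; apply/implyP => /and3P [/existsP [i' /existsP [k' /andP [hk' /eqP ->]]] hmo' hsub].
have hk'N : k' <= N by have := ltn_ord k'; lia.
have hm' := (mono_cint c i' hs hk'N).1 hmo'.
have hii : i \in cint i' k' by apply: (subsetP hsub); apply: in_cint0.
have ei := L_start hs hl hk'N hm' hii; subst i'.
have hkk : k' <= k.
  rewrite leqNgt; apply/negP => hlt.
  by move: hr; rewrite hm' // eqxx.
by rewrite eqEsubset cint_mono.
Qed.

Definition startP N s c (j : nat) : bool := (sat s j == c) && (sat s (j + N - 1) != c).
Definition starts N s c : {set 'I_N} := [set j : 'I_N | startP N s c j].
Definition rl N s c (i : nat) := (find (fun m => sat s (i + m) != c) (iota 1 N)).+1.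

Lemma rlP N s c i : size s = N -> (exists j, sat s j != c) -> 0 < N -> sat s i = c ->
  [/\ 0 < rl N s c i, rl N s c i <= N, forall m, m < rl N s c i -> sat s (i + m) = c
   & sat s (i + rl N s c i) != c].
Proof.
move=> hs [j0 hj0] h0 hi.
set P := (fun m => sat s (i + m) != c).
have hhas : has P (iota 1 N).
  have hi0 : i %% N < N by rewrite ltn_pmod.
  have hj : j0 %% N < N by rewrite ltn_pmod.
  have e := L1 hi0 hj.
  case he: (dd N (i %% N) (j0 %% N)) e => [|d] e.
    by move: hj0; rewrite -(satMN _ hs) -e addn0 modn_mod satMN // hi eqxx.
  apply/hasP; exists d.+1.
    rewrite mem_iota; have := ddlt (i %% N) (j0 %% N) h0; lia.
  by rewrite /P -(satMN _ hs) -modnDml e satMN.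
have hf := has_find P (iota 1 N); rewrite hhas size_iota in hf.
have hnf := nth_find 0 hhas.
rewrite nth_iota // add1n in hnf.
split => //.
move: hf => /esym hf.
case=> [_|m hm]; first by rewrite addn0.
have hm' : m < find P (iota 1 N) := hm. have := before_find 0 hm'.
rewrite nth_iota; last by lia.
by rewrite /P add1n => /negbFE/eqP.
Qed.

Lemma run_uniq N s c i k k' : run N s c i k -> run N s c i k' -> k = k'.
Proof.
move=> [_ h1 h2] [_ h1' h2']; case: (ltngtP k k') => // hk.
- by move: h2; rewrite h1' // eqxx.
- by move: h2'; rewrite h1 // eqxx.
Qed.

Lemma nblocksE N s c : size s = N -> (exists j, sat s j != c) ->
  nblocks N s c = #|starts N s c|.
Proof.
move=> hs hnc; rewrite /nblocks.
have hrun : forall i : 'I_N, i \in starts N s c -> run N s c i (rl N s c i).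
  move=> i; rewrite inE => /andP [/eqP h1 h2].
  have [] := rlP hs hnc (ord_pos i) h1 => *; by split.
have -> : [set S | is_block s c S] = [set cint i (rl N s c i) | i in starts N s c].
  apply/setP => S; rewrite inE; apply/idP/imsetP.
  - move=> hb; have := hb; move=> /and3P [/existsP [i /existsP [k /andP [hk /eqP E]]] _ _].
    subst S.
    have hkN : k <= N by have := ltn_ord k; lia.
    have hr := KL1 hs hnc hk hkN hb.
    have hst : i \in starts N s c.
      case: hr => hl hm _; rewrite inE /startP hl andbT.
      by rewrite -(addn0 i) hm.
    exists i => //; congr cint; exact: run_uniq hr (hrun i hst).
  - move=> [i hi ->]; have := hrun i hi.
    have [] := rlP hs hnc (ord_pos i) (_ : sat s i = c).
    + by move: hi; rewrite inE => /andP [/eqP].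
    move=> h0 hle _ _; exact: KL2.
apply: card_in_imset => i i' hi hi' E.
have [hl hm _] := hrun i hi; have [hl' hm' _] := hrun i' hi'.
have hii : i \in cint i' (rl N s c i').
  rewrite -E; apply: in_cint0.
  by have [] := rlP hs hnc (ord_pos i) (_ : sat s i = c); [move: hi; rewrite inE => /andP [/eqP] | ].
apply: (L_start hs hl _ hm' hii).
by have [] := rlP hs hnc (ord_pos i') (_ : sat s i' = c); [move: hi'; rewrite inE => /andP [/eqP] | ].
Qed.

Lemma XcondE N s : size s = N -> (exists j, sat s j != SX) ->
  X_cond N s <-> (forall (i : 'I_N) k, 0 < k -> k <= N -> run N s SX i k ->
                   sat s (i + N - 1) != sat s (i + k)).
Proof.
move=> hs hnc; split.
- move=> /forallP H i k hk hkN hr.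
  have hk1 : k < N.+1 by lia.
  have := H i => /forallP /(_ (Ordinal hk1)) /implyP /=.
  by rewrite hk (KL2 hs hk hkN hr) => /(_ isT) /and3P [].
- move=> H; apply/forallP => i; apply/forallP => k; apply/implyP => /andP [hk hb].
  have hkN : k <= N by have := ltn_ord k; lia.
  have hr := KL1 hs hnc hk hkN hb.
  have := H i k hk hkN hr; case: hr => hl _ hr.
  by rewrite /is_bit hl hr => ->.
Qed.

Lemma exists_c N s c : size s = N -> 0 < nblocks N s c -> exists j : 'I_N, sat s j = c.
Proof.
move=> hs; rewrite /nblocks card_gt0 => /set0Pn [S]; rewrite inE => /and3P [/existsP [i /existsP [k /andP [hk /eqP E]]] hm _].
by subst S; exists i; move/forall_inP: hm => /(_ i (in_cint0 i hk)) /eqP.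
Qed.

Definition Zset N s c : {set 'I_N} := [set j : 'I_N | sat s j == c].

Lemma countE N s c : size s = N -> count (pred1 c) s = #|Zset N s c|.
Proof.
move=> hs; subst N; rewrite (cnt _ SX); apply: eq_card => j.
by rewrite !inE /sat modn_small.
Qed.

Lemma count3 s : count (pred1 SX) s + count (pred1 Z0) s + count (pred1 Z1) s = size s.
Proof. elim: s => //= a s IH; case: a => /=; lia. Qed.

Lemma starts_sub N s c : starts N s c \subset Zset N s c.
Proof. by apply/subsetP => j; rewrite !inE => /andP []. Qed.

Lemma cell_facts N M s : 0 < M -> cellular N M s ->
  [/\ size s = N, #|starts N s Z0| = M, #|starts N s Z1| = M,
      (exists j : 'I_N, sat s j = Z0) & (exists j : 'I_N, sat s j = Z1)].
Proof.
move=> hM [hs h0 h1 hX].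
have [j0 hj0] : exists j : 'I_N, sat s j = Z0 by apply: (@exists_c N s Z0 hs); lia.
have [j1 hj1] : exists j : 'I_N, sat s j = Z1 by apply: (@exists_c N s Z1 hs); lia.
split => //.
- by rewrite -h0 (nblocksE hs) //; exists j1; rewrite hj1.
- by rewrite -h1 (nblocksE hs) //; exists j0; rewrite hj0.
- by exists j0.
- by exists j1.
Qed.

Lemma dimA N M s : 0 < M -> cellular N M s -> dimension s + M.*2 <= N.
Proof.
move=> hM hc; have [hs h0 h1 _ _] := cell_facts hM hc.
have := count3 s; rewrite /dimension hs !(countE _ hs).
have := subset_leq_card (starts_sub N s Z0).
have := subset_leq_card (starts_sub N s Z1).
rewrite h0 h1 -addnn; lia.
Qed.

Lemma count_lt s t : str_lt s t -> dimension s < dimension t.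
Proof.
rewrite /dimension; case=> _ + hne; elim: s t hne => [|a s IH] [|b t] //= hne /andP [hab hst].
case/orP: hab => [/eqP eab | /andP [ha /eqP hb]].
- subst b; have hne' : s != t by apply: contraNneq hne => ->.
  by rewrite ltn_add2l; apply: IH.
- subst b; move: ha; rewrite /is_bit /=.
  have : count (pred1 SX) s <= count (pred1 SX) t.
    case: (eqVneq s t) => [->|hne'] //.
    by have := IH t hne' hst; lia.
  by clear hne; case: a => //= _; rewrite add0n add1n ltnS.
Qed.

Lemma pick_c N s c : size s = N -> #|starts N s c| < #|Zset N s c| ->
  exists j : 'I_N, sat s j = c /\ sat s (j + N - 1) = c.
Proof.
move=> hs hlt.
have : starts N s c \proper Zset N s c by rewrite properEcard starts_sub.
case/properP => _ [j]; rewrite !inE /startP => /eqP hj.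
by rewrite hj eqxx /= negbK => /eqP h; exists j.
Qed.

Lemma closure N s c (n0 : nat) : 0 < N -> size s = N -> (exists j, sat s j != c) ->
  sat s n0 = c -> sat s (n0 + 1) = c ->
  exists n, [/\ sat s n = c, sat s (n + 1) = c & sat s (n + 2) != c].
Proof.
move=> h0 hs [j0 hj0] e0 e1.
pose Q n := (sat s n == c) && (sat s (n + 1) == c).
case: (boolP [exists n : 'I_N, Q n && ~~ Q (n + 1)]).
  move=> /existsP [n /andP [/andP [/eqP q1 /eqP q2]]].
  rewrite /Q q2 eqxx /= => q3; exists n; split => //.
  by rewrite -addnA in q3.
move=> /existsPn H.
have HQ : forall n, Q n -> Q (n + 1).
  move=> n; have hn : n %% N < N by rewrite ltn_pmod.
  have eQ : forall a b, a %% N = b %% N -> Q a = Q b.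
    move=> a b E; rewrite /Q (@satE s a b); last by rewrite hs.
    rewrite (@satE s (a + 1) (b + 1)) // hs -modnDml E modnDml //.
  have := H (Ordinal hn); rewrite /= (eQ (n %% N) n) ?modn_mod //.
  rewrite (eQ (n %% N + 1) (n + 1)) ?modnDml //.
  by case: (Q n) => //=; case: (Q (n+1)).
have Hall : forall k, Q (n0 + k).
  elim=> [|k IH]; first by rewrite addn0 /Q e0 e1 !eqxx.
  by rewrite -addn1 addnA; apply: HQ.
have hc : forall m, m < N -> sat s (n0 + m) = c.
  by move=> m _; move: (Hall m) => /andP [/eqP].
by move: hj0; rewrite (allc h0 hs hc) eqxx.
Qed.

Lemma satT N s (p : 'I_N) n : size s = N ->
  sat (set_nth SX s p SX) n = if n %% N == p then SX else sat s n.
Proof.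
move=> hs; rewrite /sat size_set_nth hs.
have -> : maxn p.+1 N = N by apply/maxn_idPr; exact: ltn_ord.
by rewrite nth_set_nth.
Qed.

Lemma nz N (p : 'I_N) e : 0 < e -> e < N -> (p + e) %% N != p.
Proof.
move=> he heN; apply/eqP => E.
have h1 := @ddE N p p e (ltn_ord p) (ltn_ord p) heN E.
have h2 := @ddE N p p 0 (ltn_ord p) (ltn_ord p) (ord_pos p).
rewrite addn0 modn_small // in h2; lia.
Qed.

Lemma all2_set s p : p < size s -> is_bit (nth SX s p) ->
  all2 (fun a b => (a == b) || (is_bit a && (b == SX))) s (set_nth SX s p SX).
Proof.
elim: s p => [|a s IH] [|p] //= hp hb.
- rewrite hb eqxx orbT /=.
  by elim: s {IH hp} => //= x s ->; rewrite eqxx.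
- by rewrite eqxx /= IH.
Qed.

Lemma ext_cell N M s c (p : 'I_N) : 0 < M -> M.*2 < N -> cellular N M s -> c != SX ->
  sat s (p + N - 1) = c -> sat s p = c -> sat s (p + 1) != c ->
  cellular N M (set_nth SX s p SX).
Proof.
move=> hM hMN hcell hc e1 e2 e3.
have [hs h0 h1 [j0 hj0] [j1 hj1]] := cell_facts hM hcell.
have hN : 2 < N by lia.
set t := set_nth SX s p SX.
have ht : size t = N.
  rewrite /t size_set_nth hs; apply/maxn_idPr; exact: ltn_ord.
have sT : forall n, sat t n = if n %% N == p then SX else sat s n.
  by move=> n; rewrite /t satT.
have hpN1 : (p + N - 1) %% N != p.
  have -> : p + N - 1 = p + N.-1 by lia.
  apply: nz; lia.
have hpm : p %% N = p by rewrite modn_small.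
have tp : sat t p = SX by rewrite sT hpm eqxx.
have tpN1 : sat t (p + N - 1) = c by rewrite sT (negbTE hpN1).
have F1 : forall n, sat t n != SX -> sat t n = sat s n.
  by move=> n; rewrite sT; case: ifP => //; rewrite eqxx.
have F2 : forall n, sat t n = SX -> n %% N != p -> sat s n = SX.
  by move=> n; rewrite sT => + /negbTE h; rewrite h.
have hst : forall b, b != SX -> starts N t b = starts N s b.
  move=> b hb; apply/setP => j; rewrite !inE /startP !sT modn_small //.
  case: (eqVneq (j : nat) p) => [hj|hj].
    by rewrite hj eq_sym (negbTE hb) /= e2 e1; case: (c == b).
  case: (eqVneq ((j + N - 1) %% N) p) => [hj2|hj2] //.
  have hs1 : sat s (j + N - 1) = c by rewrite -e2; apply: satE; rewrite hs hj2 hpm.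
  have hs2 : sat s j = sat s (p + 1).
    apply: satE; rewrite hs -hj2 modnDml.
    have -> : j + N - 1 + 1 = j + N by lia.
    by rewrite modnDr.
  rewrite hs1 eq_sym hb andbT /=; case: (eqVneq (sat s j) b) => //= hsb.
  by apply/esym; move: e3; rewrite -hs2 hsb eq_sym.
split => //.
- rewrite (nblocksE ht); last by exists p; rewrite tp.
  by rewrite hst.
- rewrite (nblocksE ht); last by exists p; rewrite tp.
  by rewrite hst.
have hnX : exists j, sat s j != SX by exists j0; rewrite hj0.
have hXs := (XcondE hs hnX).1 (let: And4 _ _ _ h := hcell in h).
have hnXt : exists j, sat t j != SX by exists (p + N - 1); rewrite tpN1.
apply/(XcondE ht hnXt) => i k hk hkN [hl hm hr].
have hl' := hl; have hr' := hr.
rewrite (F1 _ hl) (F1 _ hr) in hl' hr' *.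
case: (boolP [exists m : 'I_k, (i + m) %% N == p]).
- move=> /existsP [[m hmk] /= /eqP hmp].
  case: m hmk hmp => [|m] hmk hmp.
  + have hip : i = p by apply: val_inj; rewrite /= -hmp addn0 modn_small.
    subst i; rewrite e1.
    have hkN' : k < N.
      rewrite ltn_neqAle hkN andbT; apply/eqP => E; subst k.
      move: (hm N.-1); rewrite (_ : p + N.-1 = p + N - 1); last by lia.
      by rewrite tpN1 => /(_ (ltac:(lia))) E; rewrite E eqxx in hc.
    case: k hk hkN hkN' hm hr hr' hmk => [|[|k]] // _ hkN hkN' hm hr hr' _.
    all: try by rewrite eq_sym.
    have hi1 : (p + 1) %% N < N by rewrite ltn_pmod // (ord_pos p).
    have shift : forall m, sat s (Ordinal hi1 + m) = sat s (p + m.+1).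
      move=> m; apply: satE; rewrite hs /= modnDml; congr (_ %% _); lia.
    have shift' : sat s (Ordinal hi1 + N - 1) = sat s p.
      apply: satE; rewrite hs; apply: modS => /=.
      have -> : (p + 1) %% N + N - 1 + 1 = (p + 1) %% N + N by lia.
      by rewrite modnDr modn_mod.
    have := hXs (Ordinal hi1) k.+1 isT (ltac:(lia)).
    rewrite shift shift' e2 => H; apply: H; split.
    * by rewrite shift' e2.
    * move=> m hm1; rewrite shift; apply: F2; first by apply: hm; lia.
      apply: nz; lia.
    * by rewrite shift.
  + have E : sat t (i + m) = sat t (p + N - 1).
      apply: satE; rewrite ht; apply: modS.
      have -> : p + N - 1 + 1 = p + N by have := ord_pos p; lia.
      by rewrite modnDr hpm -hmp addn1 addnS.
    have := hm m (ltac:(lia)); rewrite E tpN1 => E'.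
    by rewrite E' eqxx in hc.
- move=> /existsPn Hn.
  apply: hXs hk hkN _; split => //.
  move=> m hmk; apply: F2; first by apply: hm.
  exact: (Hn (Ordinal hmk)).
Qed.


Lemma ext N M s : 0 < M -> M.*2 < N -> cellular N M s -> dimension s + M.*2 < N ->
  exists t, cellular N M t /\ str_lt s t.
Proof.
move=> hM hMN hcell hd.
have [hs h0 h1 [j0 hj0] [j1 hj1]] := cell_facts hM hcell.
have hN : 0 < N by lia.
have := count3 s; rewrite hs !(countE _ hs).
move: hd; rewrite /dimension (countE _ hs) => hd h3.
have [c [hc hlt]] : exists c, c != SX /\ #|starts N s c| < #|Zset N s c|.
  case: (ltnP M #|Zset N s Z0|) => H; [exists Z0 | exists Z1]; rewrite ?h0 ?h1; split => //; lia.
have hnc : exists j, sat s j != c.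
  by case: c hc {hlt} => // _; [exists j1; rewrite hj1 | exists j0; rewrite hj0].
have [j [ej ej']] := pick_c hs hlt.
have [n [n1 n2 n3]] : exists n, [/\ sat s n = c, sat s (n + 1) = c & sat s (n + 2) != c].
  apply: (closure (n0 := j + N - 1) hN hs hnc ej').
  rewrite -ej; apply: satE; rewrite hs.
  have -> : j + N - 1 + 1 = j + N by lia.
  by rewrite modnDr.
have hp : (n + 1) %% N < N by rewrite ltn_pmod.
set p := Ordinal hp.
have e1 : sat s (p + N - 1) = c.
  rewrite -n1; apply: satE; rewrite hs; apply: modS => /=.
  have -> : (n + 1) %% N + N - 1 + 1 = (n + 1) %% N + N by lia.
  by rewrite modnDr modn_mod.
have e2 : sat s p = c by rewrite /= satMN.
have e3 : sat s (p + 1) != c.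
  rewrite (_ : sat s (p + 1) = sat s (n + 2)) //.
  apply: satE; rewrite hs /= modnDml; congr (_ %% _); lia.
exists (set_nth SX s p SX); split; first exact: (ext_cell hM hMN hcell hc e1 e2 e3).
have hnp : nth SX s p = c by rewrite -e2 /sat hs modn_small.
have hps : (p : nat) < size s by have := ltn_ord p; lia.
split.
- by rewrite size_set_nth hs; apply/esym/maxn_idPr; have := ltn_ord p.
- by apply: all2_set; rewrite // /is_bit hnp.
- apply/eqP => E.
  have : nth SX s p = nth SX (set_nth SX s p SX) p by rewrite -E.
  by rewrite nth_set_nth /= eqxx hnp => E'; rewrite E' eqxx in hc.
Qed.

Unset Implicit Arguments.

Theorem proposition3p2 (N M : nat) :
  0 < M -> M.*2 < N ->
  forall s : seq sym,
    maximal_in_Str N M s <-> (cellular N M s /\ dimension s = N - M.*2).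
Proof.
move=> hM hMN s; split.
- move=> [hc hmax]; split => //.
  have := dimA hM hc.
  case: (ltnP (dimension s + M.*2) N) => H.
    have [t [ht hlt]] := ext hM hMN hc H.
    by case: (hmax t ht hlt).
  lia.
- move=> [hc hd]; split => // t ht hlt.
  have := dimA hM ht; have := count_lt hlt; lia.
Qed.
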